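(* With $\mathcal{A}$ as in the context, let $n=\log_2(\alpha n_t n_x^\alpha)$ and $\Pi=\mathcal{A}\mathcal{A}^T$. Then $\Pi=\bigotimes_{m=1}^{n}\pi_m$ with each $\pi_m\in\{\rho_0,\rho_3,I_2\}$ (so $\Pi$ is a diagonal $0/1$ matrix), and the matrix $$U_1=\begin{pmatrix}I-\Pi&\Pi\\ \Pi&I-\Pi\end{pmatrix}=\sigma_x\otimes\Pi+I_2\otimes(I-\Pi)$$ is a single multi-controlled NOT gate $C^qX$: it applies $\sigma_x$ to the first (ancilla) qubit conditioned on each qubit $m$ with $\pi_m=\rho_0$ being in state $|0\rangle$ and each qubit $m$ with $\pi_m=\rho_3$ being in state $|1\rangle$, where the number of controls $q=\#\{m:\pi_m\neq I_2\}$ satisfies $q\le\log_2(\alpha n_t n_x^\alpha)$.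
   Context: Single-qubit matrices: $\rho_0=|0\rangle\langle0|$, $\rho_1=|0\rangle\langle1|$, $\rho_2=|1\rangle\langle0|$, $\rho_3=|1\rangle\langle1|$, $\rho_4=I_2$; $\sigma_x$ is the Pauli-X matrix. For $n$ a power of 2, $I_n=I_2^{\otimes\log_2 n}$. Basis convention: index with binary expansion $b_{m-1}\cdots b_0$ corresponds to $|b_{m-1}\rangle\otimes\cdots\otimes|b_0\rangle$. The commutation matrix $K^{(a,b)}$ is the $ab\times ab$ permutation matrix with $K^{(a,b)}(x\otimes y)=y\otimes x$ for $x\in\mathbb{C}^b$, $y\in\mathbb{C}^a$. Standing data: $\alpha,n_t$ powers of 2, $n_x=2^s$ ($s\ge1$), integers $1\le j\le\alpha-1$, $0\le l\le j-1$; $Q_1=\log_2(\alpha n_t n_x^{\alpha}/n_x^{j+1})$; $r_0,\dots,r_{Q_1-1}\in\{0,\dots,4\}$; $P$ a real $n_x^2\times n_x^2$ permutation matrix (in the paper one of two specific permutations $P^\pm$); $\mathcal{D}=\rho_0^{\otimes s}\otimes I_{n_x}$; $$\mathcal{A}=\Bigl(\bigotimes_{k=0}^{Q_1-1}\rho_{r_k}\Bigr)\otimes\Bigl[\bigl(\rho_0^{\otimes s}\otimes K^{(n_x^l,n_x)}\bigr)\bigl(\mathcal{D}P\otimes I_{n_x^l}\bigr)K^{(n_x^2,n_x^l)}\Bigr]\otimes I_{n_x^{j-l-1}}.$$ $U_1$ acts on one ancilla qubit (first tensor factor) together with the $n$ qubits on which $\mathcal{A}$ acts. *)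

(* Defs.v *)
(* Kronecker product from mathcomp-real-closed's mxtens
   (convention: (A *t B) (i*p + j) (k*q + l) = A i k * B j l, i.e. the first
   tensor factor is the most significant digit, matching the paper). *)
From mathcomp Require Import all_boot all_order all_algebra.
From mathcomp Require Import mxtens.
Set Implicit Arguments. Unset Strict Implicit. Unset Printing Implicit Defensive.
Import GRing.Theory Num.Theory.
Local Open Scope ring_scope.

Section Q.
Variable R : realFieldType.

Definition qcast (p q : nat) (e : p = q) (A : 'M[R]_(2 ^ p)) : 'M[R]_(2 ^ q) :=
  castmx (f_equal (expn 2) e, f_equal (expn 2) e) A.

Definition qk (p q : nat) (A : 'M[R]_(2 ^ p)) (B : 'M[R]_(2 ^ q)) : 'M[R]_(2 ^ (p + q)) :=
  castmx (esym (expnD 2 p q), esym (expnD 2 p q)) (A *t B).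

Definition i0 : 'I_2 := @Ordinal 2 0 isT.
Definition i1 : 'I_2 := @Ordinal 2 1 isT.
Definition rho0 : 'M[R]_2 := delta_mx i0 i0.
Definition rho1 : 'M[R]_2 := delta_mx i0 i1.
Definition rho2 : 'M[R]_2 := delta_mx i1 i0.
Definition rho3 : 'M[R]_2 := delta_mx i1 i1.
Definition rho4 : 'M[R]_2 := 1%:M.
Definition rho (k : 'I_5) : 'M[R]_2 :=
  match val k with 0 => rho0 | 1 => rho1 | 2 => rho2 | 3 => rho3 | _ => rho4 end.
Definition sigmax : 'M[R]_2 := \matrix_(i, j) (i != j)%:R.

Lemma expn2_1 : (2 = 2 ^ 1)%N. Proof. by []. Qed.
Lemma expn2_0 : (1 = 2 ^ 0)%N. Proof. by []. Qed.

Definition q1 (A : 'M[R]_2) : 'M[R]_(2 ^ 1) := castmx (expn2_1, expn2_1) A.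

Fixpoint tensI (n : nat) : ('I_n -> 'M[R]_2) -> 'M[R]_(2 ^ n) :=
  match n return ('I_n -> 'M[R]_2) -> 'M[R]_(2 ^ n) with
  | 0 => fun _ => castmx (expn2_0, expn2_0) (1%:M : 'M[R]_1)
  | n'.+1 => fun pi => qk (q1 (pi ord0)) (tensI (fun m : 'I_n' => pi (lift ord0 m)))
  end.

Definition tpow (k : nat) (A : 'M[R]_2) : 'M[R]_(2 ^ k) := tensI (fun _ : 'I_k => A).

(* commutation matrix K^{(2^p, 2^q)}: K (x (x) y) = y (x) x for
   x in C^(2^q), y in C^(2^p). Input index ix*2^p+iy, output iy*2^q+ix. *)
Definition commK (p q : nat) : 'M[R]_(2 ^ (p + q)) :=
  \matrix_(i, i') ((i : nat) == (i' %% 2 ^ p) * 2 ^ q + i' %/ 2 ^ p)%N%:R.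

Lemma eM1 s l : (s + (s * l + s) = s * (l + 2))%N.
Proof. by rewrite mulnDr (addnC (s * l)) addnA addnn -mul2n (mulnC s 2) addnC. Qed.
Lemma eM2 s l : (s + s + s * l = s * (l + 2))%N.
Proof. by rewrite mulnDr addnn -mul2n (mulnC s 2) addnC. Qed.

Definition calD (s : nat) : 'M[R]_(2 ^ (s + s)) := qk (tpow s rho0) 1%:M.

Definition calM (s l : nat) (P : 'M[R]_(2 ^ (s + s))) : 'M[R]_(2 ^ (s * (l + 2))) :=
  qcast (eM1 s l) (qk (tpow s rho0) (commK (s * l) s))
  *m qcast (eM2 s l) (qk (calD s *m P) (1%:M : 'M[R]_(2 ^ (s * l))))
  *m qcast (eM2 s l) (commK (s + s) (s * l)).

(* Q_1 = log2(alpha n_t n_x^alpha / n_x^(j+1)), alpha = 2^a, n_t = 2^t, n_x = 2^s *)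
Definition Q1 (a t s j : nat) : nat := (a + t + s * 2 ^ a - s * j.+1)%N.

Definition nA (a t s j l : nat) : nat := (Q1 a t s j + s * (l + 2) + s * (j - l - 1))%N.

Definition calA (a t s j l : nat) (r : 'I_(Q1 a t s j) -> 'I_5)
  (P : 'M[R]_(2 ^ (s + s))) : 'M[R]_(2 ^ nA a t s j l) :=
  qk (qk (tensI (fun k => rho (r k))) (calM l P)) (1%:M : 'M[R]_(2 ^ (s * (j - l - 1)))).

Lemma eU n : (2 ^ n + 2 ^ n = 2 ^ n.+1)%N. Proof. by rewrite expnS mul2n addnn. Qed.
Definition U1 (n : nat) (Pi : 'M[R]_(2 ^ n)) : 'M[R]_(2 ^ n.+1) :=
  castmx (eU n, eU n) (block_mx (1%:M - Pi) Pi Pi (1%:M - Pi)).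

Lemma eS n : (1 + n = n.+1)%N. Proof. by []. Qed.
Definition U1_tens (n : nat) (Pi : 'M[R]_(2 ^ n)) : 'M[R]_(2 ^ n.+1) :=
  qcast (eS n) (qk (q1 sigmax) Pi + qk (q1 1%:M) (1%:M - Pi)).

Definition bit (k x : nat) : bool := odd (x %/ 2 ^ k)%N.

(* multi-controlled NOT C^qX on 1 ancilla + n qubits (ancilla = most significant
   bit n; qubit m, m : 'I_n, = tensor factor m+1 = bit n-1-m). *)
Definition mcx (n : nat) (pi : 'I_n -> 'M[R]_2) : 'M[R]_(2 ^ n.+1) :=
  \matrix_(i, i')
    (if [forall m : 'I_n, ((pi m == rho0) ==> ~~ bit (n - 1 - m)%N i')
                         && ((pi m == rho3) ==> bit (n - 1 - m)%N i')]
     then ((i : nat) == (if bit n i' then i' - 2 ^ n else i' + 2 ^ n))%N%:R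
     else ((i : nat) == i')%N%:R).

End Q.

(* Main.v *)
Require Import Defs.
From mathcomp Require Import all_boot all_order all_algebra.
From mathcomp Require Import mxtens.
From mathcomp Require Import all_fingroup zify.
Import GRing.Theory Num.Theory.
Local Open Scope ring_scope.

Section H.
Variable R : realFieldType.

Definition ent {m n} (A : 'M[R]_(m,n)) (i j : nat) : R :=
  match (insub i : option 'I_m), (insub j : option 'I_n) with
  | Some i', Some j' => A i' j' | _, _ => 0 end.

Lemma ent_ord m n (A : 'M[R]_(m,n)) (i : 'I_m) (j : 'I_n) : ent A i j = A i j.
Proof. by rewrite /ent !valK. Qed.

Lemma ent_out m n (A : 'M[R]_(m,n)) i j : ~~ ((i < m) && (j < n))%N -> ent A i j = 0.
Proof.
rewrite /ent; case/nandP=> h; first by rewrite insubN.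
by case: (insub i) => // ?; rewrite insubN.
Qed.

Lemma ent_eq m n (A B : 'M[R]_(m,n)) : (forall i j, ent A i j = ent B i j) -> A = B.
Proof. by move=> h; apply/matrixP => i j; rewrite -!ent_ord h. Qed.

Lemma ent_cast m n m' n' (e : (m = m') * (n = n')) (A : 'M[R]_(m,n)) i j :
  ent (castmx e A) i j = ent A i j.
Proof.
case: e => e1 e2; case: m' / e1; case: n' / e2.
by rewrite castmx_id.
Qed.

Lemma ent_mul m n p (A : 'M[R]_(m,n)) (B : 'M[R]_(n,p)) i j :
  ent (A *m B) i j = \sum_(k < n) ent A i k * ent B k j.
Proof.
have [/andP[hi hj]|h] := boolP ((i < m) && (j < p))%N.
  rewrite -[i]/(val (Ordinal hi)) -[j]/(val (Ordinal hj)) ent_ord mxE.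
  by apply: eq_bigr => k _; rewrite !ent_ord.
rewrite ent_out // big1 // => k _.
case/nandP: h => h; first by rewrite (@ent_out _ _ A) ?mul0r // (negbTE h).
by rewrite (@ent_out _ _ B) ?mulr0 // (negbTE h) andbF.
Qed.

Lemma ent_tr m n (A : 'M[R]_(m,n)) i j : ent A^T i j = ent A j i.
Proof.
have [/andP[hi hj]|h] := boolP ((i < n) && (j < m))%N.
  by rewrite -[i]/(val (Ordinal hi)) -[j]/(val (Ordinal hj)) !ent_ord mxE.
by rewrite !ent_out // andbC.
Qed.

Lemma ent_add m n (A B : 'M[R]_(m,n)) i j : ent (A + B) i j = ent A i j + ent B i j.
Proof.
have [/andP[hi hj]|h] := boolP ((i < m) && (j < n))%N.
  by rewrite -[i]/(val (Ordinal hi)) -[j]/(val (Ordinal hj)) !ent_ord mxE.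
by rewrite !ent_out // addr0.
Qed.

Lemma ent_opp m n (A : 'M[R]_(m,n)) i j : ent (- A) i j = - ent A i j.
Proof.
have [/andP[hi hj]|h] := boolP ((i < m) && (j < n))%N.
  by rewrite -[i]/(val (Ordinal hi)) -[j]/(val (Ordinal hj)) !ent_ord mxE.
by rewrite !ent_out // oppr0.
Qed.

Lemma ent_1 n i j : ent (1%:M : 'M[R]_n) i j = ((i == j) && (i < n))%N%:R.
Proof.
have [/andP[hi hj]|h] := boolP ((i < n) && (j < n))%N.
  by rewrite -[i]/(val (Ordinal hi)) -[j]/(val (Ordinal hj)) !ent_ord mxE hi andbT.
rewrite !ent_out //; case: eqP => //= e; subst j; move: h; rewrite andbb.
by move/negbTE => ->.
Qed.

Lemma ent_tens m n p q (A : 'M[R]_(m,n)) (B : 'M[R]_(p,q)) i j :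
  (0 < p)%N -> (0 < q)%N ->
  ent (A *t B) i j = ent A (i %/ p) (j %/ q) * ent B (i %% p) (j %% q).
Proof.
move=> hp hq.
have [/andP[hi hj]|h] := boolP ((i < m * p) && (j < n * q))%N.
  rewrite -[i]/(val (Ordinal hi)) -[j]/(val (Ordinal hj)) ent_ord mxE /=.
  have h1 : (i %/ p < m)%N by rewrite ltn_divLR.
  have h2 : (j %/ q < n)%N by rewrite ltn_divLR.
  have h3 : (i %% p < p)%N by rewrite ltn_mod.
  have h4 : (j %% q < q)%N by rewrite ltn_mod.
  rewrite -[(i %/ p)%N]/(val (Ordinal h1)) -[(j %/ q)%N]/(val (Ordinal h2)).
  rewrite -[(i %% p)%N]/(val (Ordinal h3)) -[(j %% q)%N]/(val (Ordinal h4)) !ent_ord.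
  by congr (A _ _ * B _ _); apply: val_inj.
rewrite ent_out // (@ent_out _ _ A) ?mul0r //.
by rewrite !ltn_divLR.
Qed.

Lemma ent_qk p q (A : 'M[R]_(2^p)) (B : 'M[R]_(2^q)) i j :
  ent (qk A B) i j = ent A (i %/ 2^q) (j %/ 2^q) * ent B (i %% 2^q) (j %% 2^q).
Proof. by rewrite /qk ent_cast ent_tens ?expn_gt0. Qed.

Lemma ent_qcast p q (e : p = q) (A : 'M[R]_(2^p)) i j : ent (qcast e A) i j = ent A i j.
Proof. exact: ent_cast. Qed.

Lemma ent_q1 (A : 'M[R]_2) i j : ent (q1 A) i j = ent A i j.
Proof. exact: ent_cast. Qed.

End H.
Arguments ent {R m n} A i j.

Section H2.
Variable R : realFieldType.

Definition sim {m n m' n'} (A : 'M[R]_(m,n)) (B : 'M[R]_(m',n')) :=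
  forall i j, ent A i j = ent B i j.

Lemma castmx_mul2 m m' (e : m = m') (X Y : 'M[R]_m) :
  castmx (e, e) X *m castmx (e, e) Y = castmx (e, e) (X *m Y).
Proof. by case: m' / e; rewrite !castmx_id. Qed.

Lemma qk_mul p q (A C : 'M[R]_(2^p)) (B D : 'M[R]_(2^q)) :
  qk A B *m qk C D = qk (A *m C) (B *m D).
Proof. by rewrite /qk castmx_mul2 tensmx_mul. Qed.

Lemma qk_tr p q (A : 'M[R]_(2^p)) (B : 'M[R]_(2^q)) : (qk A B)^T = qk A^T B^T.
Proof. by rewrite /qk trmx_cast trmx_tens. Qed.

Lemma qcast_mul p q (e : p = q) (A B : 'M[R]_(2^p)) :
  qcast e A *m qcast e B = qcast e (A *m B).
Proof. by rewrite /qcast castmx_mul2. Qed.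

Lemma qcast_tr p q (e : p = q) (A : 'M[R]_(2^p)) : (qcast e A)^T = qcast e A^T.
Proof. by rewrite /qcast trmx_cast. Qed.

Lemma q1_mul (A B : 'M[R]_2) : q1 A *m q1 B = q1 (A *m B).
Proof. by rewrite /q1 castmx_mul2. Qed.

Lemma q1_tr (A : 'M[R]_2) : (q1 A)^T = q1 A^T.
Proof. by rewrite /q1 trmx_cast. Qed.

Lemma qcast_1 p q (e : p = q) : qcast e (1%:M : 'M[R]_(2^p)) = 1%:M.
Proof. by case: q / e; rewrite /qcast castmx_id. Qed.

Lemma sim_trans {m n m' n' m'' n''} (A : 'M[R]_(m,n)) (B : 'M[R]_(m',n')) (C : 'M[R]_(m'',n'')) :
  sim A B -> sim B C -> sim A C.
Proof. by move=> h1 h2 i j; rewrite h1 h2. Qed.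

Lemma sim_sym {m n m' n'} (A : 'M[R]_(m,n)) (B : 'M[R]_(m',n')) : sim A B -> sim B A.
Proof. by move=> h i j; rewrite h. Qed.

Lemma sim_qk p p' q (A : 'M[R]_(2^p)) (A' : 'M[R]_(2^p')) (B B' : 'M[R]_(2^q)) :
  sim A A' -> sim B B' -> sim (qk A B) (qk A' B').
Proof. by move=> h1 h2 i j; rewrite !ent_qk h1 h2. Qed.

Lemma sim_qcast p q (e : p = q) (A : 'M[R]_(2^p)) : sim (qcast e A) A.
Proof. by move=> i j; rewrite ent_qcast. Qed.

Lemma qk_assoc p q r (A : 'M[R]_(2^p)) (B : 'M[R]_(2^q)) (C : 'M[R]_(2^r)) :
  sim (qk (qk A B) C) (qk A (qk B C)).
Proof.
move=> i j; rewrite !ent_qk -mulrA expnD.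
have e1 k : (k %/ (2^q * 2^r) = k %/ 2^r %/ 2^q)%N by rewrite mulnC divnMA.
have e2 k : ((k %/ 2^r) %% 2^q = (k %% (2^q * 2^r)) %/ 2^r)%N by rewrite modn_divl.
have e3 k : ((k %% (2^q * 2^r)) %% 2^r = k %% 2^r)%N.
  by rewrite -(modn_dvdm k (dvdn_mull (2^q) (dvdnn (2^r)))).
by rewrite !e1 !e2 !e3.
Qed.

Lemma ent_tensI0 (f : 'I_0 -> 'M[R]_2) i j :
  ent (tensI f) i j = ((i == 0) && (j == 0))%N%:R.
Proof.
rewrite /= ent_cast ent_1; case: i => [|i]; case: j => [|j] //=.
by rewrite ltnS ltn0 andbF.
Qed.

Lemma qk_0r p (A : 'M[R]_(2^p)) (f : 'I_0 -> 'M[R]_2) : sim (qk A (tensI f)) A.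
Proof. by move=> i j; rewrite ent_qk ent_tensI0 !expn0 !divn1 !modn1 mulr1. Qed.

Lemma qk_0l q (B : 'M[R]_(2^q)) (f : 'I_0 -> 'M[R]_2) : sim (qk (tensI f) B) B.
Proof.
have d0 k : (k %/ 2^q == 0)%N = (k < 2^q)%N.
  by rewrite -leqn0 leqNgt divn_gt0 ?expn_gt0 // -ltnNge.
move=> i j; rewrite ent_qk ent_tensI0 !d0.
have [hi|hi] := ltnP i (2^q); have [hj|hj] := ltnP j (2^q) => /=.
- by rewrite !modn_small // mul1r.
all: by rewrite mul0r ent_out // negb_and -!leqNgt ?hi ?hj ?orbT.
Qed.

Lemma qk_11 p q : sim (qk (1%:M : 'M[R]_(2^p)) (1%:M : 'M[R]_(2^q))) (1%:M : 'M[R]_(2^(p+q))).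
Proof.
move=> i j; rewrite ent_qk !ent_1 -natrM mulnb.
rewrite ltn_mod expn_gt0 /= andbT expnD -ltn_divLR ?expn_gt0 //.
congr (_%:R); congr nat_of_bool.
case: (i =P j) => [<-|ne]; first by rewrite !eqxx /= andbT.
rewrite /=; apply/negbTE; apply/negP => /andP[/andP[/eqP h1 _] /eqP h2]; apply: ne.
by rewrite (divn_eq i (2^q)) (divn_eq j (2^q)) h1 h2.
Qed.

Lemma tensI_ext n (f g : 'I_n -> 'M[R]_2) : f =1 g -> tensI f = tensI g.
Proof.
elim: n f g => [|n IH] f g h //=.
by rewrite h (IH _ (fun m => g (lift ord0 m))) // => m; rewrite h.
Qed.

Lemma tensI_mul n (f g : 'I_n -> 'M[R]_2) :
  tensI f *m (tensI g)^T = tensI (fun m => f m *m (g m)^T).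
Proof.
elim: n f g => [|n IH] f g /=.
  by rewrite trmx_cast castmx_mul2 trmx1 mulmx1.
have -> := qk_tr 1 n (q1 (g ord0)) (tensI (fun m => g (lift ord0 m))).
refine (etrans (qk_mul 1 n (q1 (f ord0)) (q1 (g ord0))^T _ _) _).
by rewrite q1_tr q1_mul IH.
Qed.

Lemma tensIS n (f : 'I_n.+1 -> 'M[R]_2) :
  tensI f = qk (q1 (f ord0)) (tensI (fun m => f (lift ord0 m))).
Proof. by []. Qed.

Arguments sim_trans {m n m' n' m'' n''} {A B C}.
Arguments sim_sym {m n m' n'} {A B}.
Arguments sim_qk {p p' q} {A A' B B'}.
Lemma sim_refl {m n} (A : 'M[R]_(m,n)) : sim A A.
Proof. by []. Qed.

Lemma tensI_cat p q (h : 'I_(p + q) -> 'M[R]_2) :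
  sim (tensI h) (qk (tensI (fun m => h (lshift q m))) (tensI (fun m => h (rshift p m)))).
Proof.
elim: p h => [|p IH] h.
  move=> i j; rewrite qk_0l.
  by rewrite (@tensI_ext q h (fun m => h (rshift 0 m))) // => m; congr h; apply: val_inj.
pose h' := fun m : 'I_(p+q) => h (lift ord0 m).
have E : sim (tensI h) (qk (q1 (h ord0)) (tensI h')) := fun i j => erefl.
apply: (sim_trans E).
apply: (sim_trans (sim_qk (sim_refl (q1 (h ord0))) (IH h'))).
apply: (sim_trans (sim_sym (qk_assoc _ _ _ _ _ _))).
have E1 : tensI (fun m : 'I_p.+1 => h (lshift q m)) =
    qk (q1 (h ord0)) (tensI (fun m : 'I_p => h' (lshift q m))).
  rewrite tensIS; congr (qk (q1 _) _); first by congr h; apply: val_inj.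
  by apply: tensI_ext => m; rewrite /h'; congr h; apply: val_inj.
have E2 : tensI (fun m : 'I_q => h (rshift p.+1 m)) = tensI (fun m => h' (rshift p m)).
  by apply: tensI_ext => m; rewrite /h'; congr h; apply: val_inj.
by rewrite E1 E2.
Qed.

End H2.
Arguments sim {R m n m' n'} A B.
Arguments sim_trans {R m n m' n' m'' n''} {A B C}.
Arguments sim_sym {R m n m' n'} {A B}.
Arguments sim_qk {R p p' q} {A A' B B'}.

Section H3.
Variable R : realFieldType.

Lemma perm_mxTK n (s : {perm 'I_n}) : (perm_mx s)^T *m perm_mx s = 1%:M :> 'M[R]_n.
Proof. by rewrite tr_perm_mx -perm_mxM mulVg perm_mx1. Qed.

Lemma perm_mxKT n (s : {perm 'I_n}) : perm_mx s *m (perm_mx s)^T = 1%:M :> 'M[R]_n.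
Proof. by rewrite tr_perm_mx -perm_mxM mulgV perm_mx1. Qed.

Lemma commK_lt_nat p q i : (i < 2^(p+q))%N -> ((i %% 2^p) * 2^q + i %/ 2^p < 2^(p+q))%N.
Proof.
move=> hi.
have h1 : (i %% 2^p < 2^p)%N by rewrite ltn_mod expn_gt0.
have h2 : (i %/ 2^p < 2^q)%N by rewrite ltn_divLR ?expn_gt0 // -expnD addnC.
rewrite expnD; apply: (leq_trans (n := (i %% 2^p).+1 * 2^q)).
  by rewrite mulSn addnC ltn_add2r.
by rewrite leq_mul2r h1 orbT.
Qed.

Definition commf p q (i : 'I_(2^(p+q))) : 'I_(2^(p+q)) := Ordinal (commK_lt_nat p q i (ltn_ord i)).

Lemma commf_inj p q : injective (@commf p q).
Proof.
move=> i1 i2 /(congr1 val) /= /eqP.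
have h2 (k : 'I_(2^(p+q))) : (k %/ 2^p < 2^q)%N.
  have := ltn_ord k; move: (val k) => k'.
  by rewrite ltn_divLR ?expn_gt0 // -expnD addnC.
rewrite eq_addl_mul ?h2 // xpair_eqE => /andP[/eqP e1 /eqP e2].
by apply: val_inj; rewrite /= (divn_eq i1 (2^p)) (divn_eq i2 (2^p)) e1 e2.
Qed.

Lemma commK_perm p q : commK R p q = (perm_mx (perm (@commf_inj p q)))^T :> 'M[R]_(2^(p+q)).
Proof.
apply/matrixP => i j; rewrite !mxE permE /=.
by rewrite eq_sym.
Qed.

Lemma commK_KT p q : commK R p q *m (commK R p q)^T = 1%:M :> 'M[R]_(2^(p+q)).
Proof. by rewrite commK_perm trmxK perm_mxTK. Qed.

End H3.

Section H4.
Variable R : realFieldType.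


Lemma rho0T : rho0 R *m (rho0 R)^T = rho0 R.
Proof. by rewrite /rho0 trmx_delta mul_delta_mx. Qed.

Lemma rhoT (k : 'I_5) :
  let X := rho R k *m (rho R k)^T in X = rho0 R \/ X = rho3 R \/ X = 1%:M.
Proof.
case: k => [[|[|[|[|[|k]]]]] hk] //=; rewrite /rho /=.
- by left; rewrite rho0T.
- by left; rewrite /rho1 /rho0 trmx_delta mul_delta_mx.
- by right; left; rewrite /rho2 /rho3 trmx_delta mul_delta_mx.
- by right; left; rewrite /rho3 trmx_delta mul_delta_mx.
- by right; right; rewrite /rho4 trmx1 mulmx1.
Qed.

Lemma tpow0T s : tpow s (rho0 R) *m (tpow s (rho0 R))^T = tpow s (rho0 R).
Proof. by rewrite /tpow tensI_mul; apply: tensI_ext => m; rewrite rho0T. Qed.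

Lemma tensI_tr n (f : 'I_n -> 'M[R]_2) : (tensI f)^T = tensI (fun m => (f m)^T).
Proof.
elim: n f => [|n IH] f /=; first by rewrite trmx_cast trmx1.
have -> := qk_tr R 1 n (q1 (f ord0)) (tensI (fun m => f (lift ord0 m))).
by rewrite q1_tr IH.
Qed.

Lemma tpowT s : (tpow s (rho0 R))^T = tpow s (rho0 R).
Proof. by rewrite /tpow tensI_tr; apply: tensI_ext => m; rewrite /rho0 trmx_delta. Qed.

Lemma tpow00 s : tpow s (rho0 R) *m tpow s (rho0 R) = tpow s (rho0 R).
Proof. by rewrite -{2}tpowT tpow0T. Qed.

Lemma calDT s : calD R s *m (calD R s)^T = calD R s.
Proof. by rewrite /calD qk_tr qk_mul tpow0T trmx1 mulmx1. Qed.

Lemma sim_qk2 p p' q q' (e : q = q') (A : 'M[R]_(2^p)) (A' : 'M[R]_(2^p'))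
  (B : 'M[R]_(2^q)) (B' : 'M[R]_(2^q')) :
  sim A A' -> sim B B' -> sim (qk A B) (qk A' B').
Proof. by case: q' / e in B' *; apply: sim_qk. Qed.

Lemma sim_1 a b : a = b -> sim (1%:M : 'M[R]_a) (1%:M : 'M[R]_b).
Proof. by move=> ->. Qed.

Lemma calMT s l (P : 'M[R]_(2 ^ (s + s))) : is_perm_mx P ->
  calM l P *m (calM l P)^T = qcast (eM1 s l) (qk (tpow s (rho0 R)) 1%:M).
Proof.
case/is_perm_mxP => sg ->.
rewrite /calM !trmx_mul.
set X := qcast _ (qk _ (commK _ _ _)).
set Y := qcast _ (qk _ _).
set Z := qcast _ (commK _ _ _).
have -> : X *m Y *m Z *m (Z^T *m (Y^T *m X^T)) = X *m (Y *m (Z *m Z^T) *m Y^T) *m X^T.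
  by rewrite !mulmxA.
rewrite /Z qcast_tr qcast_mul commK_KT qcast_1 mulmx1.
rewrite /Y qcast_tr qcast_mul qk_tr qk_mul trmx1 mulmx1 !trmx_mul.
rewrite (mulmxA (calD R s *m _)) -(mulmxA (calD R s)) perm_mxKT mulmx1 calDT.
have -> : qcast (eM2 s l) (qk (calD R s) (1%:M : 'M[R]_(2^(s * l)))) =
          qcast (eM1 s l) (qk (tpow s (rho0 R)) 1%:M).
  apply: ent_eq; apply: (sim_trans (sim_qcast _ _ _ _ _)).
  apply: sim_sym; apply: (sim_trans (sim_qcast _ _ _ _ _)); apply: sim_sym.
  rewrite /calD; apply: (sim_trans (qk_assoc _ _ _ _ _ _ _)).
  apply: sim_qk2; first by rewrite addnC.
    by [].
  by apply: (sim_trans (qk_11 _ _ _)); apply: sim_1; rewrite addnC.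
rewrite /X qcast_tr !qcast_mul qk_tr !qk_mul.
by rewrite tpowT !tpow00 mulmx1 commK_KT.
Qed.

End H4.
Arguments sim_qk2 {R p p' q q'} e {A A' B B'}.
Arguments tensI_ext {R n f g}.

Section H5.
Variable R : realFieldType.

Lemma tensI_cast n n' (e : n = n') (f : 'I_n -> 'M[R]_2) :
  sim (tensI f) (tensI (fun m : 'I_n' => f (cast_ord (esym e) m))).
Proof.
case: n' / e => i j.
by rewrite (@tensI_ext R n f (fun m => f (cast_ord (esym erefl) m))) // => m; rewrite cast_ord_id.
Qed.

Lemma tensI_const1 n : sim (tensI (fun _ : 'I_n => 1%:M)) (1%:M : 'M[R]_(2^n)).
Proof.
elim: n => [|n IH].
  move=> i j; rewrite ent_tensI0 ent_1 expn0; case: i => [|i]; case: j => [|j] //=.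
  by rewrite ltnS ltn0 andbF.
have E : sim (q1 (1%:M : 'M[R]_2)) (1%:M : 'M[R]_(2^1)) by move=> i' j'; rewrite ent_q1 !ent_1.
exact: (sim_trans (sim_qk2 erefl E IH) (qk_11 _ 1 n)).
Qed.

Definition piA (a t s j l : nat) (r : 'I_(Q1 a t s j) -> 'I_5) :
  'I_(nA a t s j l) -> 'M[R]_2 :=
  fun m => match split (m : 'I_((Q1 a t s j + s * (l + 2)) + s * (j - l - 1))) with
  | inl m1 => match split m1 with
     | inl k => rho R (r k) *m (rho R (r k))^T
     | inr k => if (k < s)%N then rho0 R else 1%:M end
  | inr _ => 1%:M end.

Lemma splitl p q (m : 'I_p) : split (lshift q m) = inl m.
Proof. exact: (unsplitK (inl m)). Qed.
Lemma splitr p q (m : 'I_q) : split (rshift p m) = inr m.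
Proof. exact: (unsplitK (inr m)). Qed.

Lemma PiA a t s j l (r : 'I_(Q1 a t s j) -> 'I_5) (P : 'M[R]_(2 ^ (s + s))) :
  is_perm_mx P ->
  @calA R a t s j l r P *m (@calA R a t s j l r P)^T = tensI (piA a t s j l r).
Proof.
move=> hP.
rewrite /calA qk_tr qk_mul qk_tr qk_mul calMT // tensI_mul trmx1 mulmx1.
apply: ent_eq; apply: sim_sym.
apply: (sim_trans (tensI_cat R _ _ _)).
apply: sim_qk2 => //.
  apply: (sim_trans (tensI_cat R _ _ _)).
  apply: sim_qk2 => //.
    move=> i' j'; congr ent; apply: tensI_ext => m.
    by rewrite /piA splitl splitl.
  apply: sim_sym; apply: (sim_trans (sim_qcast _ _ _ _ _)); apply: sim_sym.
  apply: (sim_trans (tensI_cast _ _ (esym (eM1 s l)) _)).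
  apply: (sim_trans (tensI_cat R _ _ _)).
  apply: sim_qk2 => //.
    move=> i' j'; rewrite /tpow; congr ent; apply: tensI_ext => m.
    rewrite /piA splitl splitr.
    by rewrite /= ltn_ord.
  apply: sim_trans (tensI_const1 _); move=> i' j'; congr ent; apply: tensI_ext => m.
  by rewrite /piA splitl splitr /= ltnNge leq_addr.
apply: sim_trans (tensI_const1 _); move=> i' j'; congr ent; apply: tensI_ext => m.
by rewrite /piA splitr.
Qed.

End H5.

Lemma bit_mod k n i : (k < n)%N -> bit k (i %% 2^n) = bit k i.
Proof.
move=> kn; rewrite /bit.
have -> : (2^n = 2^(n-k) * 2^k)%N by rewrite -expnD subnK // ltnW.
rewrite -modn_divl odd_mod //.
by rewrite oddX orbF subn_eq0 leqNgt kn.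
Qed.

Lemma odd_small x : (x < 2)%N -> (odd x : nat) = x.
Proof. by case: x => [|[|x]]. Qed.

Lemma bit_top n i : (i < 2^n.+1)%N -> (bit n i : nat) = (i %/ 2^n)%N.
Proof.
move=> hi; rewrite /bit odd_small // ltn_divLR ?expn_gt0 //.
by rewrite -expnS.
Qed.

Lemma bitS k i : bit k.+1 i = bit k (i %/ 2)%N.
Proof. by rewrite /bit expnS divnMA. Qed.

Lemma bit_eq n i j : (i < 2^n)%N -> (j < 2^n)%N ->
  (forall k, (k < n)%N -> bit k i = bit k j) -> i = j.
Proof.
elim: n i j => [|n IH] i j hi hj h.
  by move: hi hj; rewrite expn0 !ltnS !leqn0 => /eqP -> /eqP ->.
have h0 := h 0%N isT; rewrite /bit !expn0 !divn1 in h0.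
rewrite (divn_eq i 2) (divn_eq j 2) !modn2 h0; congr (_ * _ + _)%N.
apply: IH.
- by rewrite ltn_divLR // mulnC -expnS.
- by rewrite ltn_divLR // mulnC -expnS.
by move=> k hk; rewrite -!bitS h.
Qed.

Section H6.
Variable R : realFieldType.

Lemma tensI_ent n (f : 'I_n -> 'M[R]_2) i j : (i < 2^n)%N -> (j < 2^n)%N ->
  ent (tensI f) i j = \prod_(m < n) ent (f m) (bit (n - 1 - m) i) (bit (n - 1 - m) j).
Proof.
elim: n f i j => [|n IH] f i j hi hj.
  move: hi hj; rewrite ent_tensI0 big_ord0.
  by case: i => [|i]; case: j => [|j].
have -> : ent (tensI f) i j =
   ent (qk (q1 (f ord0)) (tensI (fun m => f (lift ord0 m)))) i j by [].
rewrite ent_qk ent_q1 IH ?ltn_mod ?expn_gt0 // big_ord_recl.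
rewrite subn0 subSS subn0 -!bit_top //.
congr GRing.mul.
apply: eq_bigr => m _; rewrite !bit_mod.
- by rewrite lift0 -subnDA add1n.
- by have := ltn_ord m; rewrite /=; lia.
- by have := ltn_ord m; rewrite /=; lia.
Qed.

End H6.

Section H7.
Variable R : realFieldType.

Lemma ent2 (X : 'M[R]_2) (b b' : bool) :
  ent X b b' = X (if b then i1 else i0) (if b' then i1 else i0).
Proof. by case: b; case: b'; rewrite -ent_ord. Qed.

Lemma rho03 : (rho3 R == rho0 R) = false.
Proof.
apply/eqP => /matrixP /(_ i1 i1); rewrite !mxE /=.
by move/eqP; rewrite oner_eq0.
Qed.
Lemma rho01 : ((1%:M : 'M[R]_2) == rho0 R) = false.
Proof.
apply/eqP => /matrixP /(_ i1 i1); rewrite !mxE /=.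
by move/eqP; rewrite oner_eq0.
Qed.
Lemma rho31 : ((1%:M : 'M[R]_2) == rho3 R) = false.
Proof.
apply/eqP => /matrixP /(_ i0 i0); rewrite !mxE /=.
by move/eqP; rewrite oner_eq0.
Qed.

Definition goodm (X : 'M[R]_2) := X = rho0 R \/ X = rho3 R \/ X = 1%:M.

Lemma ent_good X (b b' : bool) : goodm X ->
  ent X b b' = ((b == b') && ((X == rho0 R) ==> ~~ b') && ((X == rho3 R) ==> b'))%:R.
Proof.
rewrite ent2; case=> [->|[->|->]]; rewrite ?eqxx ?rho03 ?rho01 ?rho31 ?(eq_sym (rho0 R)) ?rho03 /=;
  by case: b; case: b'; rewrite !mxE.
Qed.

End H7.
Arguments goodm {R}.

Section H8.
Variable R : realFieldType.

Definition cnd n (pi : 'I_n -> 'M[R]_2) (x : nat) :=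
  [forall m : 'I_n, ((pi m == rho0 R) ==> ~~ bit (n - 1 - m)%N x)
                         && ((pi m == rho3 R) ==> bit (n - 1 - m)%N x)].

Lemma prod_bool n (P : 'I_n -> bool) :
  \prod_(m < n) (P m)%:R = ([forall m, P m])%:R :> R.
Proof.
case: (boolP [forall m, P m]) => [/forallP h|/forallP h].
  by rewrite big1 // => m _; rewrite h.
have [m hm] : exists m, ~~ P m.
  by apply/existsP; rewrite -negb_forall; apply/negP => /forallP.
by rewrite (bigD1 m) //= (negbTE hm) mul0r.
Qed.

Lemma tensI_good n (pi : 'I_n -> 'M[R]_2) i j : (forall m, goodm (pi m)) ->
  (i < 2^n)%N -> (j < 2^n)%N ->
  ent (tensI pi) i j = ((i == j) && cnd n pi j)%:R.
Proof.
move=> hg hi hj; rewrite tensI_ent //.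
under eq_bigr => m _ do rewrite ent_good //.
rewrite prod_bool; congr (GRing.natmul _ (nat_of_bool _)).
apply/forallP/andP => [h|[/eqP <- h] m]; last first.
  by rewrite eqxx -andbA /=; move/forallP: h => /(_ m).
split; last by apply/forallP => m; have := h m; rewrite -andbA => /andP[].
apply/eqP; apply: (bit_eq n) => // k hk.
have hk' : (n - 1 - k < n)%N by lia.
have := h (Ordinal hk'); rewrite /= -andbA => /andP[/eqP e _].
by move: e; have -> : (n - 1 - (n - 1 - k) = k)%N by lia.
Qed.

End H8.
Arguments cnd {R} n pi x.

Section H9.
Variable R : realFieldType.

Lemma ent_block m1 m2 n1 n2 (A : 'M[R]_(m1,n1)) (B : 'M[R]_(m1,n2))
   (C : 'M[R]_(m2,n1)) (D : 'M[R]_(m2,n2)) i j :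
  (i < m1 + m2)%N -> (j < n1 + n2)%N ->
  ent (block_mx A B C D) i j =
  if (i < m1)%N then (if (j < n1)%N then ent A i j else ent B i (j - n1))
  else (if (j < n1)%N then ent C (i - m1) j else ent D (i - m1) (j - n1)).
Proof.
move=> hi hj.
have -> : ent (block_mx A B C D) i j = block_mx A B C D (Ordinal hi) (Ordinal hj).
  by rewrite -ent_ord.
rewrite /block_mx mxE; case: splitP => k /= ek; rewrite mxE; case: splitP => k' /= ek'; subst i j.
- by rewrite !ltn_ord ent_ord.
- by rewrite ltn_ord ltnNge leq_addr addKn ent_ord.
- by rewrite ltn_ord ltnNge leq_addr addKn ent_ord.
- by rewrite !ltnNge !leq_addr !addKn ent_ord.
Qed.

Lemma ent_sig x y : ent (sigmax R) x y = ((x < 2) && (y < 2) && (x != y))%N%:R.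
Proof.
have [/andP[hi hj]|h] := boolP ((x < 2) && (y < 2))%N.
  by rewrite -[x]/(val (Ordinal hi)) -[y]/(val (Ordinal hj)) ent_ord mxE /=.
by rewrite ent_out // (negbTE h).
Qed.

Lemma divmodN N i : (0 < N)%N -> (N <= i)%N -> (i < N + N)%N ->
  (i %/ N = 1)%N /\ (i %% N = i - N)%N.
Proof.
move=> hN h1 h2.
have e : i = (1 * N + (i - N))%N by rewrite mul1n subnKC.
have hs : (i - N < N)%N by rewrite ltn_subLR.
by rewrite e divnMDl // modnMDl divn_small // modn_small // addn0 mul1n addKn.
Qed.

End H9.

Section H10.
Variable R : realFieldType.

Lemma U1_tens_eq n (Pi : 'M[R]_(2^n)) : U1 Pi = U1_tens Pi.
Proof.
apply/matrixP => I J; rewrite -!ent_ord.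
have hN : (0 < 2^n)%N by rewrite expn_gt0.
have hi : (I < 2^n + 2^n)%N by rewrite eU.
have hj : (J < 2^n + 2^n)%N by rewrite eU.
move: (val I) (val J) hi hj => i j hi hj.
rewrite /U1 ent_cast ent_block // /U1_tens ent_qcast ent_add !ent_qk !ent_q1 !ent_add !ent_opp.
rewrite ent_sig !ent_1.
have [li|li] := ltnP i (2^n); have [lj|lj] := ltnP j (2^n).
- rewrite !divn_small // !modn_small //= li.
  by rewrite mul0r add0r mul1r.
- have [dj mj] := divmodN _ _ hN lj hj.
  rewrite dj mj !divn_small // !modn_small //=.
  by rewrite mul1r mul0r addr0.
- have [di mi] := divmodN _ _ hN li hi.
  rewrite di mi !divn_small // !modn_small //=.
  by rewrite mul1r mul0r addr0.
- have [di mi] := divmodN _ _ hN li hi; have [dj mj] := divmodN _ _ hN lj hj.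
  rewrite di mi dj mj /=.
  by rewrite mul0r add0r mul1r.
Qed.


End H10.

Section H11.
Variable R : realFieldType.

Lemma cnd_mod n (pi : 'I_n -> 'M[R]_2) x : cnd n pi (x %% 2^n) = cnd n pi x.
Proof.
apply: eq_forallb => m; rewrite bit_mod //.
by have := ltn_ord m; lia.
Qed.

Lemma U1_mcx n (pi : 'I_n -> 'M[R]_2) : (forall m, goodm (pi m)) ->
  U1 (tensI pi) = mcx pi.
Proof.
move=> hg.
apply/matrixP => I J; rewrite mxE -/(cnd n pi J) -!ent_ord.
have hN : (0 < 2^n)%N by rewrite expn_gt0.
have hi : (I < 2^n + 2^n)%N by rewrite eU.
have hj : (J < 2^n + 2^n)%N by rewrite eU.
have hj' : (J < 2^n.+1)%N by [].
move: (val I) (val J) hi hj hj' => i j hi hj hj'.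
rewrite /U1 ent_cast ent_block //.
have [li|li] := ltnP i (2^n); have [lj|lj] := ltnP j (2^n).
- have bj : bit n j = false by rewrite /bit divn_small.
  rewrite bj ent_add ent_opp ent_1 tensI_good // li andbT.
  have e : (i == j + 2^n)%N = false by apply/eqP; lia.
  by case: (cnd n pi j) => /=; rewrite ?e ?andbT ?andbF ?subrr ?subr0.
- have [dj mj] := divmodN _ _ hN lj hj.
  have bj : bit n j = true by rewrite /bit dj.
  have lj' : (j - 2^n < 2^n)%N by lia.
  rewrite bj tensI_good // -(cnd_mod _ _ j) mj.
  have e : (i == j)%N = false by apply/eqP; lia.
  by case: (cnd n pi (j - 2^n)) => /=; rewrite ?e ?andbT ?andbF.
- have [di mi] := divmodN _ _ hN li hi.
  have bj : bit n j = false by rewrite /bit divn_small.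
  have li' : (i - 2^n < 2^n)%N by lia.
  rewrite bj tensI_good //.
  have e : (i == j)%N = false by apply/eqP; lia.
  have e2 : (i - 2^n == j)%N = (i == j + 2^n)%N by apply/eqP/eqP; lia.
  by case: (cnd n pi j) => /=; rewrite ?e ?e2 ?andbT ?andbF.
- have [di mi] := divmodN _ _ hN li hi; have [dj mj] := divmodN _ _ hN lj hj.
  have bj : bit n j = true by rewrite /bit dj.
  have li' : (i - 2^n < 2^n)%N by lia.
  have lj' : (j - 2^n < 2^n)%N by lia.
  rewrite bj ent_add ent_opp ent_1 tensI_good // -(cnd_mod _ _ j) mj li' andbT.
  have e : (i == j - 2^n)%N = false by apply/eqP; lia.
  have e2 : (i - 2^n == j - 2^n)%N = (i == j)%N by apply/eqP/eqP; lia.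
  by case: (cnd n pi (j - 2^n)) => /=; rewrite ?e ?e2 ?andbT ?andbF ?subrr ?subr0.
Qed.

End H11.

Theorem theorem3 (R : realFieldType) (a t s j l : nat)
  (r : 'I_(Q1 a t s j) -> 'I_5) (P : 'M[R]_(2 ^ (s + s))) :
  (1 <= s)%N -> (1 <= j <= 2 ^ a - 1)%N -> (l <= j - 1)%N ->
  is_perm_mx P ->
  let A := @calA R a t s j l r P in
  let Pi := A *m A^T in
  exists pi : 'I_(nA a t s j l) -> 'M[R]_2,
    (forall m, pi m = rho0 R \/ pi m = rho3 R \/ pi m = 1%:M) /\
    Pi = tensI pi /\
    U1 Pi = U1_tens Pi /\
    U1 Pi = mcx pi /\
    nA a t s j l = (a + t + s * 2 ^ a)%N /\
    (#|[set m | pi m != 1%:M]| <= a + t + s * 2 ^ a)%N.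
Proof.
move=> hs /andP[hj1 hj2] hl hP A Pi.
have good : forall m, goodm (piA R a t s j l r m).
  move=> m; rewrite /piA; case: split => [m1|m2]; last by right; right.
  case: split => [k|k]; first exact: rhoT.
  by case: ifP => _; [left | right; right].
have ePi : Pi = tensI (piA R a t s j l r) by rewrite /Pi /A PiA.
have enA : nA a t s j l = (a + t + s * 2 ^ a)%N.
  have ha : (0 < 2 ^ a)%N by rewrite expn_gt0.
  have h1 : (s * j.+1 <= s * 2 ^ a)%N by rewrite leq_mul2l; apply/orP; right; lia.
  have h2 : (s * (l + 2) + s * (j - l - 1) = s * j.+1)%N.
    by rewrite -mulnDr; congr muln; lia.
  rewrite /nA /Q1 -addnA h2 subnK //.
  by apply: (leq_trans h1); rewrite leq_addl.
exists (piA R a t s j l r); split; first exact: good.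
split; first exact: ePi.
split; first exact: U1_tens_eq.
split; first by rewrite ePi U1_mcx.
split; first exact: enA.
by rewrite -enA; apply: (leq_trans (max_card _)); rewrite card_ord.
Qed.
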